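(* $$L_{\mathbb{R},2}(\ell_\infty^2)=\sup\left\{\left[2t^{4/3}+2\left(\sqrt{t(1-t)}\right)^{4/3}\right]^{3/4}: t\in[1/2,1]\right\}\approx 1.7700,$$ the supremum being attained at some $t_0\approx 0.9147$. In particular $L_{\mathbb{R},2}\ge 1.7700$.
   Context: All spaces are real. For an $m$-homogeneous polynomial $P$ on a Banach space, $\check P$ denotes its polar (the unique symmetric $m$-linear form with $\check P(x,\dots,x)=P(x)$). For vectors $x_1,\dots,x_N$ in a Banach space $X$, $\|(x_j)_{j=1}^N\|_{w,1}=\sup\{\sum_{j=1}^N|\varphi(x_j)|:\varphi\in X',\|\varphi\|\le1\}$. $L_{\mathbb{R},m}$ denotes the smallest constant $L$ such that for every real Banach space $X$, every continuous $m$-homogeneous polynomial $P:X\to\mathbb{R}$, every $N$ and all $x^{(k)}_j\in X$ ($1\le j\le N$, $1\le k\le m$), $$\Big(\sum_{j_1,\dots,j_m=1}^N|\check P(x^{(1)}_{j_1},\dots,x^{(m)}_{j_m})|^{\frac{2m}{m+1}}\Big)^{\frac{m+1}{2m}}\le L\|P\|\prod_{k=1}^m\|(x^{(k)}_j)_{j=1}^N\|_{w,1}.$$ $\ell_\infty^n$ is $\mathbb{R}^n$ with the sup norm; for a polynomial $P$ on $\ell_\infty^n$, $\|P\|=\sup\{|P(x)|:x\in[-1,1]^n\}$. For $P$ an $m$-homogeneous polynomial on $\ell_\infty^n$ put $\Phi_{m,n}(P)=\big(\sum_{i_1,\dots,i_m=1}^n|\check P(e_{i_1},\dots,e_{i_m})|^{\frac{2m}{m+1}}\big)^{\frac{m+1}{2m}}$,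 and $L_{\mathbb{R},m}(\ell_\infty^n)=\sup\{\Phi_{m,n}(P): P \text{ $m$-homogeneous on } \ell_\infty^n,\ \|P\|\le1\}$. One has $L_{\mathbb{R},m}\ge L_{\mathbb{R},m}(\ell_\infty^n)$ (take $x^{(k)}_j=e_j$). *)

(* Defs.v *)
From Stdlib Require Import Reals.
Open Scope R_scope.

(* Real power x^y for x >= 0, y > 0, with the correct convention 0^y = 0
   (Stdlib's Rpower 0 y = 1, which is wrong for our purposes). *)
Definition rpow (x y : R) : R :=
  match Rle_lt_dec x 0 with
  | left _ => 0
  | right _ => Rpower x y
  end.

(* A 2-homogeneous polynomial P on R^2 is determined by its polar, a symmetric
   bilinear form with entries b11 = P^(e1,e1), b12 = b21 = P^(e1,e2),
   b22 = P^(e2,e2); P(x1,x2) = b11 x1^2 + 2 b12 x1 x2 + b22 x2^2. *)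
Definition hpoly2 (b11 b12 b22 x1 x2 : R) : R :=
  b11 * x1 * x1 + 2 * b12 * x1 * x2 + b22 * x2 * x2.

Definition norm_le1 (b11 b12 b22 : R) : Prop :=
  forall x1 x2, -1 <= x1 <= 1 -> -1 <= x2 <= 1 ->
    Rabs (hpoly2 b11 b12 b22 x1 x2) <= 1.

Definition Phi22 (b11 b12 b22 : R) : R :=
  rpow (rpow (Rabs b11) (4/3) + rpow (Rabs b12) (4/3)
        + rpow (Rabs b12) (4/3) + rpow (Rabs b22) (4/3)) (3/4).

(* The set {Phi_{2,2}(P) : P 2-homogeneous on l_inf^2, ||P|| <= 1};
   L_{R,2}(l_inf^2) is its supremum. *)
Definition L22_set (s : R) : Prop :=
  exists b11 b12 b22, norm_le1 b11 b12 b22 /\ s = Phi22 b11 b12 b22.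

Definition fL (t : R) : R :=
  rpow (2 * rpow t (4/3) + 2 * rpow (sqrt (t * (1 - t))) (4/3)) (3/4).

Definition fL_set (s : R) : Prop :=
  exists t, 1/2 <= t <= 1 /\ s = fL t.

(* Main.v *)
Require Import Defs.
From Stdlib Require Import Reals Lra Psatz.
From Coquelicot Require Coquelicot.
Open Scope R_scope.

Lemma rpow_pos x y : 0 < x -> rpow x y = Rpower x y.
Proof. intros H; unfold rpow; destruct (Rle_lt_dec x 0); [lra|reflexivity]. Qed.
Lemma rpow_nonpos x y : x <= 0 -> rpow x y = 0.
Proof. intros H; unfold rpow; destruct (Rle_lt_dec x 0); [reflexivity|lra]. Qed.
Lemma Rpower_gt0 x y : 0 < Rpower x y.
Proof. unfold Rpower; apply exp_pos. Qed.
Lemma rpow_ge0 x y : 0 <= rpow x y.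
Proof. unfold rpow; destruct (Rle_lt_dec x 0); [lra|left; apply Rpower_gt0]. Qed.
Lemma rpow_mono x z y : 0 <= x <= z -> 0 <= y -> rpow x y <= rpow z y.
Proof.
  intros [H1 H2] Hy. destruct (Req_dec x 0) as [->|Hx].
  - rewrite rpow_nonpos by lra. apply rpow_ge0.
  - rewrite !rpow_pos by lra. apply Rle_Rpower_l; lra.
Qed.
Lemma rpow_1 y : rpow 1 y = 1.
Proof. rewrite rpow_pos by lra. unfold Rpower. rewrite ln_1, Rmult_0_r. apply exp_0. Qed.
Lemma rpow_43_le x : 0 <= x <= 1 -> rpow x (4/3) <= x.
Proof.
  intros [H1 H2]. destruct (Req_dec x 0) as [->|Hx].
  - rewrite rpow_nonpos by lra. lra.
  - rewrite rpow_pos by lra. replace (4/3) with (1 + 1/3) by field.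
    rewrite Rpower_plus, Rpower_1 by lra.
    assert (Rpower x (1/3) <= Rpower 1 (1/3)) by (apply Rle_Rpower_l; lra).
    assert (Rpower 1 (1/3) = 1) by (unfold Rpower; rewrite ln_1, Rmult_0_r; apply exp_0).
    nra.
Qed.

Lemma nF1 a b c : norm_le1 a b c -> Rabs a <= 1 /\ Rabs c <= 1.
Proof.
  intros H. split.
  - generalize (H 1 0 ltac:(lra) ltac:(lra)). unfold hpoly2.
    replace (a * 1 * 1 + 2 * b * 1 * 0 + c * 0 * 0) with a by ring. auto.
  - generalize (H 0 1 ltac:(lra) ltac:(lra)). unfold hpoly2.
    replace (a * 0 * 0 + 2 * b * 0 * 1 + c * 1 * 1) with c by ring. auto.
Qed.
Lemma nF2 a b c : norm_le1 a b c -> Rabs (a + c) + 2 * Rabs b <= 1.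
Proof.
  intros H.
  generalize (H 1 1 ltac:(lra) ltac:(lra)). generalize (H 1 (-1) ltac:(lra) ltac:(lra)).
  unfold hpoly2. intros H1 H2.
  revert H1 H2. unfold Rabs; repeat destruct Rcase_abs; intros; lra.
Qed.
Lemma nF3 a b c : norm_le1 a b c -> a * c < 0 -> Rabs b < Rabs c ->
  b * b <= Rabs c * (1 - Rabs a).
Proof.
  intros H Hac Hb.
  assert (Hc : c <> 0) by (intro; subst; lra).
  set (y := - b / c).
  assert (Hy : y * c = - b) by (unfold y; field; auto).
  assert (Hy1 : -1 <= y <= 1).
  { revert Hb. unfold Rabs; repeat destruct Rcase_abs; intros; split; nra. }
  generalize (H 1 y ltac:(lra) Hy1). unfold hpoly2.
  replace (a * 1 * 1 + 2 * b * 1 * y + c * y * y) with (a - c * y * y) by nra.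
  replace (b * b) with (y * y * c * c) by nra.
  unfold Rabs; repeat destruct Rcase_abs; intros; nra.
Qed.
Lemma norm_swap a b c : norm_le1 a b c -> norm_le1 c b a.
Proof.
  intros H x1 x2 H1 H2. generalize (H x2 x1 H2 H1). unfold hpoly2.
  replace (a * x2 * x2 + 2 * b * x2 * x1 + c * x1 * x1)
    with (c * x1 * x1 + 2 * b * x1 * x2 + a * x2 * x2) by ring. auto.
Qed.

Definition Fp (t : R) := 2 * rpow t (4/3) + 2 * rpow (sqrt (t * (1 - t))) (4/3).

Lemma Fp1 : Fp 1 = 2.
Proof.
  unfold Fp. replace (1 * (1 - 1)) with 0 by ring. rewrite sqrt_0, rpow_1, rpow_nonpos by lra. ring.
Qed.

Lemma core_abs A B D : 0 <= A <= 1 -> 0 <= D <= 1 -> 0 <= B -> D <= A -> 1/2 <= A ->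
  B * B <= D * (1 - A) ->
  rpow A (4/3) + rpow B (4/3) + rpow B (4/3) + rpow D (4/3) <= Fp A.
Proof.
  intros HA HD HB HDA HA2 HBB. unfold Fp.
  assert (B <= sqrt (A * (1 - A))).
  { rewrite <- (sqrt_square B) by lra. apply sqrt_le_1_alt. nra. }
  assert (rpow B (4/3) <= rpow (sqrt (A * (1 - A))) (4/3)) by (apply rpow_mono; lra).
  assert (rpow D (4/3) <= rpow A (4/3)) by (apply rpow_mono; lra).
  lra.
Qed.

Lemma core a b c : norm_le1 a b c -> exists t, 1/2 <= t <= 1 /\
  rpow (Rabs a) (4/3) + rpow (Rabs b) (4/3) + rpow (Rabs b) (4/3) + rpow (Rabs c) (4/3) <= Fp t.
Proof.
  intros H.
  destruct (nF1 _ _ _ H) as [HA HD].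
  pose proof (nF2 _ _ _ H) as H2.
  pose proof (Rabs_pos a). pose proof (Rabs_pos b). pose proof (Rabs_pos c).
  assert (Hsum : rpow (Rabs a) (4/3) + rpow (Rabs b) (4/3) + rpow (Rabs b) (4/3) + rpow (Rabs c) (4/3)
     <= Rabs a + 2 * Rabs b + Rabs c).
  { assert (rpow (Rabs a) (4/3) <= Rabs a) by (apply rpow_43_le; lra).
    assert (rpow (Rabs c) (4/3) <= Rabs c) by (apply rpow_43_le; lra).
    assert (rpow (Rabs b) (4/3) <= Rabs b) by (apply rpow_43_le; pose proof (Rabs_pos (a+c)); lra).
    lra. }
  assert (Htwo : Rabs a + 2 * Rabs b + Rabs c <= 2 -> exists t, 1/2 <= t <= 1 /\
    rpow (Rabs a) (4/3) + rpow (Rabs b) (4/3) + rpow (Rabs b) (4/3) + rpow (Rabs c) (4/3) <= Fp t).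
  { intros. exists 1. rewrite Fp1. split; lra. }
  destruct (Rle_lt_dec 0 (a * c)) as [Hac|Hac].
  - apply Htwo. assert (Rabs a + Rabs c = Rabs (a + c)).
    { revert Hac. unfold Rabs; repeat destruct Rcase_abs; intros; nra. }
    lra.
  - assert (HAD : Rabs (Rabs a - Rabs c) + 2 * Rabs b <= 1).
    { revert H2 Hac. unfold Rabs; repeat destruct Rcase_abs; intros; nra. }
    destruct (Rlt_dec (Rabs b) (Rabs a)) as [Hba|Hba];
    [destruct (Rlt_dec (Rabs b) (Rabs c)) as [Hbc|Hbc]|].
    + pose proof (nF3 _ _ _ H Hac Hbc) as E1.
      assert (Hca : c * a < 0) by lra.
      pose proof (nF3 _ _ _ (norm_swap _ _ _ H) Hca Hba) as E2.
      assert (Hbb : Rabs b * Rabs b = b * b) by (rewrite <- Rabs_mult; apply Rabs_pos_eq; nra).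
      destruct (Rle_lt_dec (Rmax (Rabs a) (Rabs c)) (1/2)) as [Hm|Hm].
      * apply Htwo. pose proof (Rmax_l (Rabs a) (Rabs c)). pose proof (Rmax_r (Rabs a) (Rabs c)). lra.
      * destruct (Rle_dec (Rabs c) (Rabs a)) as [Hca'|Hca'].
        -- exists (Rabs a). rewrite Rmax_left in Hm by lra. split; [lra|].
           apply core_abs; lra.
        -- exists (Rabs c). rewrite Rmax_right in Hm by lra. split; [lra|].
           replace (rpow (Rabs a) (4/3) + rpow (Rabs b) (4/3) + rpow (Rabs b) (4/3) + rpow (Rabs c) (4/3))
             with (rpow (Rabs c) (4/3) + rpow (Rabs b) (4/3) + rpow (Rabs b) (4/3) + rpow (Rabs a) (4/3)) by ring.
           apply core_abs; lra.
    + apply Htwo. revert HAD. unfold Rabs at 1; destruct Rcase_abs; intros; lra.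
    + apply Htwo. revert HAD. unfold Rabs at 1; destruct Rcase_abs; intros; lra.
Qed.

Lemma fL_Fp t : fL t = rpow (Fp t) (3/4).
Proof. reflexivity. Qed.

Lemma L22_le s : L22_set s -> exists t, 1/2 <= t <= 1 /\ s <= fL t.
Proof.
  intros [a [b [c [H ->]]]]. destruct (core _ _ _ H) as [t [Ht Hle]].
  exists t. split; auto. unfold Phi22. rewrite fL_Fp. apply rpow_mono; [|lra].
  split; auto. pose proof (rpow_ge0 (Rabs a) (4/3)). pose proof (rpow_ge0 (Rabs b) (4/3)).
  pose proof (rpow_ge0 (Rabs c) (4/3)). lra.
Qed.

Lemma fL_in_L22 t : 1/2 <= t <= 1 -> L22_set (fL t).
Proof.
  intros Ht. set (s := sqrt (t * (1 - t))).
  assert (Hs0 : 0 <= s) by apply sqrt_pos.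
  assert (Hs : s * s = t * (1 - t)) by (apply sqrt_sqrt; nra).
  exists t, s, (-t). split.
  - intros x y Hx Hy. unfold hpoly2.
    assert (E1 : t * ((1 - t) * x * x - 2 * s * x * y + t * y * y) = (s * x - t * y) * (s * x - t * y)) by nra.
    assert (E2 : t * ((1 - t) * y * y + 2 * s * x * y + t * x * x) = (s * y + t * x) * (s * y + t * x)) by nra.
    apply Rabs_le. split.
    + assert (0 <= (1 - t) * y * y + 2 * s * x * y + t * x * x).
      { apply (Rmult_le_reg_l t); [lra|]. rewrite Rmult_0_r, E2. apply Rle_0_sqr. }
      nra.
    + assert (0 <= (1 - t) * x * x - 2 * s * x * y + t * y * y).
      { apply (Rmult_le_reg_l t); [lra|]. rewrite Rmult_0_r, E1. apply Rle_0_sqr. }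
      nra.
  - unfold Phi22. rewrite fL_Fp. unfold Fp. fold s.
    rewrite Rabs_Ropp, !Rabs_pos_eq by lra. f_equal. ring.
Qed.
Module CQ.
Import Coquelicot.Coquelicot.

Definition phi (r : R) := (1 + r^2)^3 / (1 + r^3)^4.
Definition dphi (r : R) := 6 * r * (1 - 2 * r - r^3) * (1 + r^2)^2 / (1 + r^3)^5.

Lemma phi_der r : 0 <= r -> is_derive phi r (dphi r).
Proof.
  intros Hr. unfold phi, dphi. auto_derive.
  - assert (0 < 1 + r^3) by (pose proof (pow_le r 3 Hr); lra).
    simpl in H. apply Rgt_not_eq. repeat apply Rmult_lt_0_compat; lra.
  - assert (0 < 1 + r^3) by (pose proof (pow_le r 3 Hr); lra). field. lra.
Qed.

Lemma phi_cont r : 0 <= r -> continuity_pt phi r.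
Proof.
  intros Hr. apply derivable_continuous_pt. exists (dphi r).
  apply is_derive_Reals, phi_der; auto.
Qed.

Lemma phi_max r0 r : 0 <= r0 -> r0^3 + 2 * r0 - 1 = 0 -> 0 <= r -> phi r <= phi r0.
Proof.
  intros H0 Hr0 Hr.
  destruct (Rle_lt_dec r r0) as [Hle|Hlt].
  - destruct (MVT_gen phi r r0 dphi) as [c [Hc Heq]].
    + intros x Hx. rewrite Rmin_left, Rmax_right in Hx by lra. apply phi_der; lra.
    + intros x Hx. rewrite Rmin_left, Rmax_right in Hx by lra. apply phi_cont; lra.
    + rewrite Rmin_left, Rmax_right in Hc by lra.
      assert (0 <= dphi c).
      { unfold dphi. assert (0 < 1 + c^3) by (pose proof (pow_le c 3 ltac:(lra)); lra).
        apply Rmult_le_pos.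
        - apply Rmult_le_pos; [|apply pow_le; nra].
          assert (c^3 <= r0^3) by (apply pow_incr; lra). nra.
        - left. apply Rinv_0_lt_compat. apply pow_lt. lra. }
      nra.
  - destruct (MVT_gen phi r0 r dphi) as [c [Hc Heq]].
    + intros x Hx. rewrite Rmin_left, Rmax_right in Hx by lra. apply phi_der; lra.
    + intros x Hx. rewrite Rmin_left, Rmax_right in Hx by lra. apply phi_cont; lra.
    + rewrite Rmin_left, Rmax_right in Hc by lra.
      assert (dphi c <= 0).
      { unfold dphi. assert (0 < 1 + c^3) by (pose proof (pow_le c 3 ltac:(lra)); lra).
        unfold Rdiv. rewrite <- (Rmult_0_l (/ (1 + c^3)^5)). apply Rmult_le_compat_r.
        - left. apply Rinv_0_lt_compat. apply pow_lt. lra.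
        - assert (r0^3 <= c^3) by (apply pow_incr; lra).
          assert (0 <= (1 + c^2)^2) by (apply pow_le; nra).
          assert (0 <= 6 * c) by lra.
          assert (1 - 2 * c - c^3 <= 0) by lra.
          assert (6 * c * (1 - 2 * c - c ^ 3) <= 0) by nra. nra. }
      nra.
Qed.

Definition lo := 453397 / 1000000.
Definition hi := 453398 / 1000000.

Lemma r0_ex : { r0 : R | lo <= r0 <= hi /\ r0^3 + 2 * r0 - 1 = 0 }.
Proof.
  destruct (IVT (fun r => r^3 + 2 * r - 1) lo hi) as [z [Hz Hz2]].
  - intros x. apply derivable_continuous_pt. exists (3 * x^2 + 2).
    apply is_derive_Reals. auto_derive; auto. ring.
  - unfold lo, hi; lra.
  - unfold lo. lra.
  - unfold hi. lra.
  - exists z. auto.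
Qed.
End CQ.
Import CQ.

Lemma Rp3 t k : Rpower t (INR k / 3) = (Rpower t (1/3))^k.
Proof. rewrite <- Rpower_pow by apply Rpower_gt0. rewrite Rpower_mult. f_equal. field. Qed.

Lemma cube_lt a b : 0 <= a -> a < b -> a^3 < b^3.
Proof.
  intros Ha Hab. assert (0 < (b - a) * (a*a + a*b + b*b)).
  { apply Rmult_lt_0_compat; nra. }
  simpl. nra.
Qed.

Lemma cube_inj a b : 0 <= a -> 0 <= b -> a^3 = b^3 -> a = b.
Proof.
  intros Ha Hb H. destruct (Rtotal_order a b) as [Hl|[He|Hl]]; auto.
  - assert (a^3 < b^3) by (apply cube_lt; lra). lra.
  - assert (b^3 < a^3) by (apply cube_lt; lra). lra.
Qed.

Lemma cube_le a b : 0 <= a -> 0 <= b -> a^3 <= b^3 -> a <= b.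
Proof.
  intros Ha Hb H. destruct (Rle_lt_dec a b) as [|Hl]; auto.
  assert (b^3 < a^3) by (apply cube_lt; lra). lra.
Qed.

Lemma Fp_repr t : 0 < t < 1 ->
  Fp t = 2 * ((Rpower t (1/3))^4 + (Rpower t (1/3))^2 * (Rpower (1-t) (1/3))^2).
Proof.
  intros Ht. unfold Fp.
  assert (Hz : 0 < t * (1 - t)) by nra.
  rewrite rpow_pos by lra. rewrite rpow_pos by (apply sqrt_lt_R0; auto).
  rewrite <- Rpower_sqrt by auto. rewrite Rpower_mult.
  replace (4/3) with (INR 4 / 3) by (simpl; field).
  replace (/ 2 * (INR 4 / 3)) with (INR 2 / 3) by (simpl; field).
  rewrite <- Rpower_mult_distr by lra. rewrite !Rp3. ring.
Qed.

Lemma cube_t t : 0 < t -> (Rpower t (1/3))^3 = t.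
Proof.
  intros Ht. rewrite <- Rp3. replace (INR 3 / 3) with 1 by (simpl; field). apply Rpower_1; auto.
Qed.

Lemma H_eq x y : 0 < x -> 0 <= y -> x^3 + y^3 = 1 -> (x^4 + x^2 * y^2)^3 = phi (y / x).
Proof.
  intros Hx Hy H. unfold phi.
  set (r := y / x). assert (Hy' : y = r * x) by (unfold r; field; lra).
  rewrite Hy' in H |- *.
  assert (E : x^12 * (1 + r^3)^4 = 1).
  { replace (x^12 * (1 + r^3)^4) with ((x^3 + (r * x)^3)^4) by ring. rewrite H. ring. }
  assert (0 < 1 + r^3).
  { assert (0 <= r) by (unfold r; apply Rmult_le_pos; [lra|left; apply Rinv_0_lt_compat; lra]).
    pose proof (pow_le r 3 H0). lra. }
  apply (Rmult_eq_reg_r ((1 + r^3)^4)); [|apply Rgt_not_eq, pow_lt; lra].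
  field_simplify; [|apply Rgt_not_eq; try apply pow_lt; lra].
  transitivity ((1 + r^2)^3 * (x^12 * (1 + r^3)^4)); [ring|]. rewrite E. ring.
Qed.

Theorem mainTheorem2 :
  exists L t0 : R,
    is_lub L22_set L /\
    is_lub fL_set L /\
    1/2 <= t0 <= 1 /\ fL t0 = L /\
    Rabs (t0 - 9147 / 10000) < 5 / 100000 /\
    Rabs (L - 17700 / 10000) < 5 / 100000.
Proof.
  destruct r0_ex as [r0 [[Hlo Hhi] Hr0]]. unfold lo, hi in *.
  set (t0 := 1 / (2 - 2 * r0)).
  assert (Ht0 : 914740 / 1000000 < t0 < 914743 / 1000000).
  { unfold t0. split.
    - apply (Rmult_lt_reg_r (2 - 2 * r0)); [lra|]. field_simplify; lra.
    - apply (Rmult_lt_reg_r (2 - 2 * r0)); [lra|]. field_simplify; lra. }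
  set (x0 := Rpower t0 (1/3)). set (y0 := Rpower (1 - t0) (1/3)).
  assert (Hx0 : 0 < x0) by apply Rpower_gt0.
  assert (Hy0 : 0 < y0) by apply Rpower_gt0.
  assert (Hx3 : x0^3 = t0) by (apply cube_t; lra).
  assert (Hy3 : y0^3 = 1 - t0) by (apply cube_t; lra).
  set (H0 := x0^4 + x0^2 * y0^2).
  assert (HH0p : 0 < H0) by (unfold H0; pose proof (pow_lt x0 4 Hx0); pose proof (pow_lt x0 2 Hx0); pose proof (pow_lt y0 2 Hy0); nra).
  assert (HH0 : 0 <= H0) by lra.
  assert (Hyr : y0 / x0 = r0).
  { apply cube_inj.
    - left; apply Rdiv_lt_0_compat; lra.
    - lra.
    - replace ((y0 / x0)^3) with (y0^3 / x0^3) by (field; lra). rewrite Hx3, Hy3.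
      unfold t0. field_simplify; try lra; try nra. }
  assert (HH03 : H0^3 = phi r0).
  { rewrite <- Hyr. apply H_eq; try lra. }
  assert (HFt0 : Fp t0 = 2 * H0) by (rewrite Fp_repr by lra; reflexivity).
  assert (Hbound : forall t, 1/2 <= t <= 1 -> Fp t <= Fp t0).
  { intros t Ht. rewrite HFt0.
    assert (Hgen : forall x y, 0 < x -> 0 <= y -> x^3 + y^3 = 1 -> x^4 + x^2 * y^2 <= H0).
    { intros x y Hx Hy Hxy. apply cube_le; [nra|auto|]. rewrite HH03, H_eq by auto.
      apply phi_max; try lra. apply Rmult_le_pos; [lra|left; apply Rinv_0_lt_compat; lra]. }
    destruct (Req_dec t 1) as [->|Ht1].
    - rewrite Fp1. pose proof (Hgen 1 0 ltac:(lra) ltac:(lra) ltac:(ring)). lra.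
    - rewrite Fp_repr by lra. apply Rmult_le_compat_l; [lra|]. apply Hgen.
      + apply Rpower_gt0.
      + left; apply Rpower_gt0.
      + rewrite !cube_t by lra. ring. }
  assert (HFp0 : forall t, 0 <= Fp t).
  { intros t. unfold Fp. pose proof (rpow_ge0 t (4/3)). pose proof (rpow_ge0 (sqrt (t * (1 - t))) (4/3)). lra. }
  assert (HfL : forall t, 1/2 <= t <= 1 -> fL t <= fL t0).
  { intros t Ht. rewrite !fL_Fp. apply rpow_mono; [split; auto|lra]. }
  assert (Ht0m : 1/2 <= t0 <= 1) by lra.
  set (L := fL t0).
  assert (HL4 : L^4 = 8 * phi r0).
  { unfold L. rewrite fL_Fp, HFt0, rpow_pos by lra.
    rewrite <- Rpower_pow by apply Rpower_gt0. rewrite Rpower_mult.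
    replace (3/4 * INR 4) with (INR 3) by (simpl; field). rewrite Rpower_pow by lra.
    rewrite <- HH03. ring. }
  assert (HLpos : 0 < L).
  { unfold L. rewrite fL_Fp, HFt0, rpow_pos by lra. apply Rpower_gt0. }
  assert (Hphi : phi r0 = (1 + r0^2)^3 / (2 - 2 * r0)^4).
  { unfold phi. replace (1 + r0^3) with (2 - 2 * r0) by lra. reflexivity. }
  set (lo := 453397 / 1000000) in *. set (hi := 453398 / 1000000) in *.
  assert (HL4' : L^4 * (2 - 2 * r0)^4 = 8 * (1 + r0^2)^3).
  { rewrite HL4, Hphi. field. unfold hi in *; lra. }
  assert (Hn1 : (1 + lo^2)^3 <= (1 + r0^2)^3) by (apply pow_incr; unfold lo in *; nra).
  assert (Hn2 : (1 + r0^2)^3 <= (1 + hi^2)^3) by (apply pow_incr; unfold hi, lo in *; nra).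
  assert (Hd1 : (2 - 2 * hi)^4 <= (2 - 2 * r0)^4) by (apply pow_incr; unfold hi in *; lra).
  assert (Hd2 : (2 - 2 * r0)^4 <= (2 - 2 * lo)^4) by (apply pow_incr; unfold lo, hi in *; lra).
  assert (Hc1 : (176995/100000)^4 * (2 - 2 * lo)^4 < 8 * (1 + lo^2)^3) by (unfold lo; lra).
  assert (Hc2 : 8 * (1 + hi^2)^3 < (177005/100000)^4 * (2 - 2 * hi)^4) by (unfold hi; lra).
  assert (HdP : 0 < (2 - 2 * r0)^4) by (apply pow_lt; unfold hi in *; lra).
  assert (HLlo : 176995/100000 < L).
  { apply Rnot_le_lt. intros Hc.
    assert (L^4 <= (176995/100000)^4) by (apply pow_incr; lra).
    assert (L^4 * (2 - 2 * r0)^4 <= (176995/100000)^4 * (2 - 2 * lo)^4).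
    { apply Rmult_le_compat; try lra. apply pow_le; lra. }
    lra. }
  assert (HLhi : L < 177005/100000).
  { apply Rnot_le_lt. intros Hc.
    assert ((177005/100000)^4 <= L^4) by (apply pow_incr; lra).
    assert ((177005/100000)^4 * (2 - 2 * hi)^4 <= L^4 * (2 - 2 * r0)^4).
    { apply Rmult_le_compat; try lra; apply pow_le; unfold hi; lra. }
    lra. }
  assert (HlubF : is_lub fL_set L).
  { split.
    - intros s [t [Ht ->]]. apply HfL; auto.
    - intros M HM. apply HM. exists t0. split; auto. }
  exists L, t0. split; [|split; [exact HlubF|split; [exact Ht0m|split; [reflexivity|split]]]].
  - split.
    + intros s Hs. destruct (L22_le s Hs) as [t [Ht Hst]]. apply (Rle_trans _ _ _ Hst); apply HfL; auto.
    + intros M HM. apply HM. apply fL_in_L22; auto.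
  - apply Rabs_def1; lra.
  - apply Rabs_def1; lra.
Qed.
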